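(* Let $n\ge2$ and $u\in\mathfrak D_n$. If either ($u(1)=1$ and $u(k)>0$ for all $1\le k\le n$) or ($u(1)<-1$, $u^{-1}(1)<-1$, and $|\{1\le i\le n: u(i)<0\}|=2$), then $$C(u)=\{t_1\}\cup\{t_i: i\ne1,\ |u(j)|<u(k)\text{ for all }0\le j\le i<k\le n\};$$ otherwise $$C(u)=\{t_i: i\ne1,\ |u(j)|<u(k)\text{ for all }0\le j\le i<k\le n\},$$ where $u(0)=0$ by convention and $i$ ranges over $\{0,1,\dots,n-1\}$.
   Context: $\mathfrak B_n$ is the group of signed permutations of $\{\pm1,\dots,\pm n\}$ ($w(-i)=-w(i)$), with $\tau_0=(-1,1)$ and $\tau_i=(i,i+1)(-i,-i-1)$ for $1\le i\le n-1$. For $n\ge2$, $\mathfrak D_n$ is the subgroup of $\mathfrak B_n$ (of order $2^{n-1}n!$) generated by $t_0=\tau_0\tau_1\tau_0$ (so $t_0(1)=-2$, $t_0(2)=-1$) and $t_i=\tau_i$ for $1\le i\le n-1$; it is a Coxeter group with generators $S=\{t_0,\dots,t_{n-1}\}$. For $w\in\mathfrak D_n$, $S(w)$ is the set of generators appearing in a (any) reduced expression of $w$ in $\mathfrak D_n$, and $C(w)=S\setminus S(w)$. *)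

(* Defs.v *)
From mathcomp Require Import all_boot all_order all_algebra.
Set Implicit Arguments. Unset Strict Implicit. Unset Printing Implicit Defensive.
Import Order.TTheory GRing.Theory Num.Theory.
Local Open Scope ring_scope.

(* Signed permutations of {±1..±n} are modelled as maps int -> int fixing
   every integer outside {±1..±n} (in particular 0, matching u(0)=0).
   Generator t_i of D_n (i : 'I_n, i = 0..n-1):
     t_0 = tau_0 tau_1 tau_0 : 1 <-> -2, 2 <-> -1
     t_i = (i,i+1)(-i,-i-1)  for 1 <= i <= n-1. *)
Definition Dgen (n : nat) (i : 'I_n) (x : int) : int :=
  if val i == 0%N then
    (if x == 1 then -2 else if x == 2 then -1
     else if x == -1 then 2 else if x == -2 then 1 else x)
  else
    let a := (val i)%:Z in
    if x == a then a + 1 else if x == a + 1 then a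
    else if x == - a then - a - 1 else if x == - a - 1 then - a else x.

Definition Deval (n : nat) (w : seq 'I_n) : int -> int :=
  foldr (fun i f => Dgen i \o f) id w.

Definition inDn (n : nat) (u : int -> int) : Prop :=
  exists w : seq 'I_n, forall x, Deval w x = u x.

Definition reduced_expr (n : nat) (w : seq 'I_n) (u : int -> int) : Prop :=
  (forall x, Deval w x = u x) /\
  (forall w' : seq 'I_n, (forall x, Deval w' x = u x) -> (size w <= size w')%N).

Definition inS (n : nat) (u : int -> int) (i : 'I_n) : Prop :=
  exists w : seq 'I_n, reduced_expr w u /\ i \in w.

Definition inC (n : nat) (u : int -> int) (i : 'I_n) : Prop := ~ inS u i.

(* Main.v *)
Require Import Defs.
From mathcomp Require Import all_boot all_order all_algebra.
From mathcomp Require Import zify.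
From Stdlib Require Import FunctionalExtensionality.
Set Implicit Arguments. Unset Strict Implicit. Unset Printing Implicit Defensive.
Import Order.TTheory GRing.Theory Num.Theory.
Local Open Scope ring_scope.

Ltac dgc := match goal with |- context[?a == ?b] =>
  lazymatch a with context[if _ then _ else _] => fail | _ =>
  lazymatch b with context[if _ then _ else _] => fail | _ => case: (a =P b) => ? end end end.
Ltac dg := rewrite /Dgen; repeat dgc; try lia.

Lemma DgenN n (j : 'I_n) y : Dgen j (- y) = - Dgen j y.
Proof. dg. Qed.

Lemma DgenK n (j : 'I_n) y : Dgen j (Dgen j y) = y.
Proof. dg. Qed.

Lemma Dgen_big n (j : 'I_n) (y : int) : (2 <= n)%N -> n%:Z < y -> Dgen j y = y.
Proof. have hj : (val j < n)%N := ltn_ord j. dg. Qed.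

Lemma Dgen_rng n (j : 'I_n) (y : int) : (2 <= n)%N -> 0 < `|y| <= n%:Z -> 0 < `|Dgen j y| <= n%:Z.
Proof. have hj : (val j < n)%N := ltn_ord j. dg. Qed.

Lemma Dgen0_1 n (j : 'I_n) : val j = 0%N -> Dgen j 1%:Z = -2.
Proof. dg. Qed.
Lemma Dgen0_2 n (j : 'I_n) : val j = 0%N -> Dgen j 2%:Z = -1.
Proof. dg. Qed.
Lemma Dgen0_fix n (j : 'I_n) (y : int) : val j = 0%N -> 3 <= y -> Dgen j y = y.
Proof. dg. Qed.
Lemma DgenS_1 n (j : 'I_n) : (0 < val j)%N -> Dgen j (val j)%:Z = (val j).+1%:Z.
Proof. dg. Qed.
Lemma DgenS_2 n (j : 'I_n) : (0 < val j)%N -> Dgen j (val j).+1%:Z = (val j)%:Z.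
Proof. dg. Qed.
Lemma DgenS_fix n (j : 'I_n) (y : int) : (0 < val j)%N -> 0 < y -> y <> (val j)%:Z ->
  y <> (val j).+1%:Z -> Dgen j y = y.
Proof. dg. Qed.

Lemma Deval_rcons n (w : seq 'I_n) j : Deval (rcons w j) = Deval w \o Dgen j.
Proof. elim: w => [|a w IH] //=; by rewrite IH. Qed.

Lemma Deval_cat n (a b : seq 'I_n) : Deval (a ++ b) = Deval a \o Deval b.
Proof. elim: a => [|c a IH] //=; by rewrite IH. Qed.

Lemma Deval_rev n (b : seq 'I_n) : Deval b \o Deval (rev b) = id.
Proof.
elim: b => [|c b IH] //=; rewrite rev_cons Deval_rcons.
apply: functional_extensionality => y /=.
have := congr1 (fun f => f (Dgen c y)) IH => /= ->. by rewrite DgenK.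
Qed.

Definition sq n (x : int -> int) := map (fun k : nat => x k%:Z) (iota 1 n).

Record Inv n (x : int -> int) : Prop := {
  invN : forall y, x (- y) = - x y;
  invB : forall y : int, n%:Z < y -> x y = y;
  invR : forall y, 0 < `|y| <= n%:Z -> 0 < `|x y| <= n%:Z;
  invI : injective x;
  invS : forall v : int, 0 < v <= n%:Z -> exists k, 0 < `|k| <= n%:Z /\ `|x k| = v;
  invP : ~~ odd (count (fun v => v < 0) (sq n x)) }.

Lemma iota12 n : (2 <= n)%N -> iota 1 n = 1%N :: 2%N :: iota 3 (n - 2).
Proof. by case: n => [|[|m]] //= _; rewrite subn2. Qed.

Lemma iota_split n j : (1 <= j)%N -> (j < n)%N ->
  iota 1 n = iota 1 j.-1 ++ j :: j.+1 :: iota j.+2 (n - j.+1).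
Proof.
move=> h1 h2. have E : n = (j.-1 + (n - j.+1).+2)%N by lia.
rewrite {1}E iotaD /=. have -> : (1 + j.-1 = j)%N by lia. by [].
Qed.

Lemma sq_gen0 n (x : int -> int) (j : 'I_n) : (2 <= n)%N -> val j = 0%N -> (forall y, x (- y) = - x y) ->
  sq n x = x 1%:Z :: x 2%:Z :: drop 2 (sq n x) /\
  sq n (x \o Dgen j) = (- x 2%:Z) :: (- x 1%:Z) :: drop 2 (sq n x).
Proof.
move=> hn hj hN; rewrite /sq iota12 //= drop0; split=> //.
rewrite Dgen0_1 // Dgen0_2 // !hN; congr (_ :: _ :: _).
apply/eq_in_map => k; rewrite mem_iota => /andP[hk _] /=.
by rewrite Dgen0_fix //; lia.
Qed.

Lemma sq_genS n (x : int -> int) (j : 'I_n) : (0 < val j)%N ->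
  exists l r, sq n x = l ++ x (val j)%:Z :: x (val j).+1%:Z :: r /\
              sq n (x \o Dgen j) = l ++ x (val j).+1%:Z :: x (val j)%:Z :: r.
Proof.
move=> hj; have hjn := ltn_ord j; have ej : nat_of_ord j = val j := erefl.
exists (map (fun k : nat => x k%:Z) (iota 1 (val j).-1)),
       (map (fun k : nat => x k%:Z) (iota (val j).+2 (n - (val j).+1))).
rewrite /sq (@iota_split n (val j) hj hjn) !map_cat /=; split=> //.
rewrite DgenS_1 // DgenS_2 //; congr (_ ++ _ :: _ :: _).
- apply/eq_in_map => k; rewrite mem_iota => /andP[h1 h2] /=.
  rewrite DgenS_fix //; lia.
- apply/eq_in_map => k; rewrite mem_iota => /andP[h1 h2] /=.
  rewrite DgenS_fix //; lia.
Qed.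
Ltac ltcase := repeat match goal with |- context[(?a < ?b)%R] => let H := fresh "Hc" in case: (ltP a b) => H end; cbn [nat_of_bool negb addb].

Definition g (p q : int) : nat := ((q < p)%R + (p + q < 0)%R)%N.
Fixpoint L (s : seq int) : nat := if s is p :: r then (sumn (map (g p) r) + L r)%N else 0%N.

Lemma L_swap l p q r :
  (L (l ++ p :: q :: r) + (p < q)%R)%N = (L (l ++ q :: p :: r) + (q < p)%R)%N.
Proof.
elim: l => [|c l IH] /=.
  rewrite /g (addrC q p); lia.
rewrite !map_cat !sumn_cat /=. lia.
Qed.

Lemma gneg p q c : (g (- q) c + g (- p) c = g p c + g q c)%N.
Proof. rewrite /g; ltcase; lia. Qed.

Lemma Sneg p q r : (sumn (map (g (- q)) r) + sumn (map (g (- p)) r) =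
  sumn (map (g p) r) + sumn (map (g q) r))%N.
Proof. elim: r => [|c r IH] //=; have := gneg p q c; lia. Qed.

Lemma L_neg p q r :
  (L (p :: q :: r) + (0 < p + q)%R)%N = (L ((- q) :: (- p) :: r) + (p + q < 0)%R)%N.
Proof.
rewrite /=; have := Sneg p q r; rewrite /g; ltcase; lia.
Qed.

Definition ndesc n (j : 'I_n) (x : int -> int) : bool :=
  if val j == 0%N then 0 < x 1%:Z + x 2%:Z else x (val j)%:Z < x (val j).+1%:Z.
Definition len n x := L (sq n x).

Lemma len_step n x (j : 'I_n) : (2 <= n)%N -> Inv n x ->
  (len n (x \o Dgen j) + ~~ ndesc j x = len n x + ndesc j x)%N.
Proof.
move=> hn I; rewrite /len /ndesc.
case: eqP => hj.
- have [e1 e2] := @sq_gen0 n x j hn hj (invN I).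
  have := L_neg (x 1%:Z) (x 2%:Z) (drop 2 (sq n x)). rewrite -e1 -e2.
  have hne : x 1%:Z + x 2%:Z <> 0.
    move=> h. have : x 2%:Z = x (- 1%:Z) by rewrite (invN I); lia.
    by move/(invI I).
  ltcase; lia.
- have hjp : (0 < val j)%N by lia.
  have [l [r [e1 e2]]] := @sq_genS n x j hjp.
  have := L_swap l (x (val j)%:Z) (x (val j).+1%:Z) r. rewrite -e1 -e2.
  have hne : x (val j)%:Z <> x (val j).+1%:Z.
    by move/(invI I) => [] /eqP; rewrite eqn_leq ltnn andbF.
  ltcase; lia.
Qed.

Lemma Inv_step n x (j : 'I_n) : (2 <= n)%N -> Inv n x -> Inv n (x \o Dgen j).
Proof.
move=> hn I; split.
- by move=> y /=; rewrite DgenN (invN I).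
- by move=> y hy /=; rewrite Dgen_big // (invB I).
- by move=> y hy /=; apply: (invR I); exact: Dgen_rng.
- by move=> a b /= /(invI I) h; rewrite -(DgenK j a) h DgenK.
- move=> v hv; have [k [hk e]] := invS I hv; exists (Dgen j k); split.
    exact: Dgen_rng.
  by rewrite /= DgenK.
- have H := invP I.
  case: (val j =P 0%N) => hj.
    have [e1 e2] := @sq_gen0 n x j hn hj (invN I). rewrite e2. rewrite e1 in H.
    have h1 := invR I (y := 1%:Z) ltac:(lia).
    have h2 := invR I (y := 2%:Z) ltac:(lia).
    move: H; rewrite /= !oddD !oddb; ltcase; try lia; by case: (odd (count _ (drop 2 (sq n x)))).
  have hjp : (0 < val j)%N by lia.
  have [l [r [e1 e2]]] := @sq_genS n x j hjp. rewrite e2. rewrite e1 in H.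
  move: H; rewrite !count_cat /= !oddD !oddb. by case: (odd (count _ l)); case: (odd (count _ r)); case: (x _ < 0)%R; case: (x _ < 0)%R.
Qed.

Lemma count_pos s : count (fun v : int => v < 0) (map Posz s) = 0%N.
Proof. elim: s => [|a s IH] //=; rewrite IH; case: ltP => h //; lia. Qed.

Lemma Inv_id n : Inv n id.
Proof.
split => //.
- move=> v hv; exists v; split => //; lia.
- by rewrite /sq count_pos.
Qed.

Lemma sumg0 m s : (forall q, q \in s -> (m < q)%N) -> sumn (map (g m%:Z) (map Posz s)) = 0%N.
Proof.
elim: s => [|a s IH] //= h.
rewrite IH; last by move=> q hq; apply: h; rewrite inE hq orbT.
have := h a (mem_head _ _); rewrite /g; ltcase; lia.
Qed.

Lemma L_iota k m : (0 < m)%N -> L (map Posz (iota m k)) = 0%N.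
Proof.
elim: k m => [|k IH] m hm //=.
rewrite IH // sumg0 // => q; rewrite mem_iota; lia.
Qed.

Lemma len_id n : len n id = 0%N.
Proof. exact: L_iota. Qed.

Lemma Inv_word n y (c : seq 'I_n) : (2 <= n)%N -> Inv n y -> Inv n (y \o Deval c).
Proof.
move=> hn I; elim/last_ind: c => [|c j IH]; first exact: I.
rewrite Deval_rcons; exact: (Inv_step j hn IH).
Qed.

Lemma len_word n y (c : seq 'I_n) : (2 <= n)%N -> Inv n y ->
  (len n (y \o Deval c) <= len n y + size c)%N.
Proof.
move=> hn I; elim/last_ind: c => [|c j IH]; first by rewrite addn0.
rewrite Deval_rcons size_rcons.
have := len_step j hn (Inv_word c hn I).
have -> : (y \o Deval c) \o Dgen j = y \o (Deval c \o Dgen j) by [].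
move: IH; case: (ndesc _ _) => /=; lia.
Qed.

Lemma Inv_pos_id n x : (2 <= n)%N -> Inv n x ->
  (forall m : nat, (1 <= m <= n)%N -> x m%:Z = m%:Z) -> x = id.
Proof.
move=> hn I H; apply: functional_extensionality => y.
have P : forall m : nat, x m%:Z = m%:Z.
  move=> [|m].
    have h : x 0%:Z = - x 0%:Z by rewrite -(invN I). lia.
  case: (leqP m.+1 n) => hm; first by apply: H; lia.
  by apply: (invB I); lia.
case: y => m; first exact: P.
by rewrite NegzE (invN I) P.
Qed.

Lemma ndesc_id n x : (2 <= n)%N -> Inv n x -> (forall j : 'I_n, ndesc j x) -> x = id.
Proof.
move=> hn I H.
have h0 : 0 < x 1%:Z + x 2%:Z.
  by have := H (@Ordinal n 0 ltac:(lia)); rewrite /ndesc /=.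
have hinc : forall k : nat, (1 <= k)%N -> (k < n)%N -> x k%:Z < x k.+1%:Z.
  move=> k h1 h2; have := H (Ordinal h2); rewrite /ndesc /=.
  case: eqP => [?|_ //]; lia.
have mono : forall k m : nat, (1 <= k)%N -> (k <= m)%N -> (m <= n)%N -> x k%:Z <= x m%:Z.
  move=> k; elim=> [|m IH] h1 h2 h3; first lia.
  case: (leqP k m) => h4; last by have -> : k = m.+1 by lia.
  have := IH h1 h4 ltac:(lia); have := hinc m ltac:(lia) ltac:(lia); lia.
have hx2 : 0 < x 2%:Z by have := hinc 1%N isT ltac:(lia); lia.
have hpos : forall k : nat, (2 <= k <= n)%N -> 0 < x k%:Z.
  move=> k hk; have := mono 2%N k isT ltac:(lia) ltac:(lia); lia.
have hx1 : 0 < x 1%:Z.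
  have := invP I; rewrite /sq iota12 //=.
  have -> : count (fun v : int => v < 0) [seq x k%:Z | k <- iota 3 (n - 2)] = 0%N.
    apply/eqP; rewrite eqn0Ngt -has_count; apply/hasPn => v /mapP [k hk ->].
    rewrite mem_iota in hk. case: ltP => //= h; have := hpos k ltac:(lia); lia.
  have := invR I (y := 1%:Z) ltac:(lia).
  case: ltP => h1; case: ltP => h2 //=; lia.
have lower : forall k : nat, (1 <= k <= n)%N -> k%:Z <= x k%:Z.
  elim=> [|k IH] hk; first lia.
  case: k IH hk => [|k] IH hk; first lia.
  have := IH ltac:(lia); have := hinc k.+1 isT ltac:(lia); lia.
have upper : forall d : nat, (d < n)%N -> x (n - d)%:Z <= (n - d)%:Z.
  elim=> [|d IH] hd.
    rewrite subn0; have := invR I (y := n%:Z) ltac:(lia); lia.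
  have := hinc (n - d.+1)%N ltac:(lia) ltac:(lia).
  have -> : (n - d.+1).+1 = (n - d)%N by lia.
  have := IH ltac:(lia); lia.
apply: (Inv_pos_id hn I) => m hm.
have := lower m hm; have := upper (n - m)%N ltac:(lia).
have -> : (n - (n - m) = m)%N by lia.
lia.
Qed.

Lemma word_exists n x : (2 <= n)%N -> Inv n x ->
  exists w : seq 'I_n, Deval w = x /\ size w = len n x.
Proof.
move=> hn; move: {2}(len n x) (erefl (len n x)) => N; elim: N x => [|N IH] x hN I.
  exists [::]; split => //. apply/esym; apply: (ndesc_id hn I) => j.
  have := len_step j hn I; rewrite hN; case: (ndesc j x) => //=; lia.
case: (boolP [forall j : 'I_n, ndesc j x]) => [/forallP H|].
  by move: hN; rewrite (ndesc_id hn I H) len_id.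
rewrite negb_forall => /existsP [j hj].
have := len_step j hn I; rewrite hN (negbTE hj) /= => e.
have [w [e1 e2]] := IH (x \o Dgen j) ltac:(lia) (Inv_step j hn I).
exists (rcons w j); split; last by rewrite size_rcons e2; lia.
rewrite Deval_rcons e1; apply: functional_extensionality => y /=; by rewrite DgenK.
Qed.

Definition sg1 (y : int) : int := if y == 1 then -1 else if y == -1 then 1 else y.

Definition P n (i : 'I_n) (x : int -> int) : Prop :=
  if val i == 1%N then (forall k : int, 0 < k <= n%:Z -> 0 < sg1 (x (sg1 k)))
  else (forall j k : nat, (j <= i)%N -> (i < k)%N -> (k <= n)%N -> `|x j%:Z| < x k%:Z).

Ltac dg2 := rewrite /Dgen /sg1; repeat dgc; try lia.

Lemma sg1K y : sg1 (sg1 y) = y.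
Proof. dg2. Qed.

Lemma P_id n (i : 'I_n) : P i id.
Proof.
rewrite /P; case: eqP => _.
- move=> k hk /=; rewrite sg1K; lia.
- move=> j k h1 h2 h3 /=; lia.
Qed.

Lemma Dgen_sg1 n (j : 'I_n) k : (2 <= n)%N -> val j <> 1%N -> 0 < k <= n%:Z ->
  exists k', 0 < k' <= n%:Z /\ Dgen j (sg1 k) = sg1 k'.
Proof.
move=> hn hj1 hk; have hj : (val j < n)%N := ltn_ord j.
case: (val j =P 0%N) => hj0.
- exists (if k == 1 then 2 else if k == 2 then 1 else k); split; dg2.
- exists (Dgen j k); split; dg2.
Qed.

Lemma DgA n (j : 'I_n) (m j' : nat) : val j <> m -> m <> 1%N -> (m < n)%N -> (j' <= m)%N ->
  `|Dgen j j'%:Z| <= m%:Z.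
Proof. move=> h1 h2 h3 h4; have hj : (val j < n)%N := ltn_ord j. dg. Qed.

Lemma DgB n (j : 'I_n) (m k : nat) : val j <> m -> m <> 1%N -> (m < k)%N -> (k <= n)%N ->
  m%:Z < Dgen j k%:Z <= n%:Z.
Proof. move=> h1 h2 h3 h4; have hj : (val j < n)%N := ltn_ord j. dg. Qed.

Lemma absx n x y : Inv n x -> `|x (`|y|)| = `|x y|.
Proof.
move=> I; case: (lerP 0 y) => hy; first by rewrite (ger0_norm hy).
by rewrite (ltr0_norm hy) (invN I) normrN.
Qed.

Lemma x0 n x : Inv n x -> x 0 = 0.
Proof. move=> I; have h : x 0 = - x 0 by rewrite -(invN I) oppr0. lia. Qed.

Lemma P_step n x (i j : 'I_n) : (2 <= n)%N -> Inv n x -> P i x -> j != i -> P i (x \o Dgen j).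
Proof. have ei : nat_of_ord i = val i := erefl.
move=> hn I HP hne; have hi := ltn_ord i.
have hji : val j <> val i by move=> e; move: hne; rewrite (val_inj e) eqxx.
move: HP; rewrite /P; case: eqP => hi1.
- move=> H k hk /=. have [k' [hk' ->]] := Dgen_sg1 hn (j := j) ltac:(lia) hk. exact: H.
- move=> H j' k h1 h2 h3 /=.
  have [jj [hjj ejj]] : exists jj : nat, (jj <= i)%N /\ `|x (Dgen j j'%:Z)| = `|x jj%:Z|.
    exists (absz (Dgen j j'%:Z)); split.
      have := @DgA n j (val i) j' hji hi1 hi h1; lia.
    exact: (esym (absx _ I)).
  have [kk [hkk ekk]] : exists kk : nat, (i < kk <= n)%N /\ Dgen j k%:Z = kk%:Z.
    have := @DgB n j (val i) k hji hi1 h2 h3 => hb.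
    exists (absz (Dgen j k%:Z)); split; lia.
  rewrite ejj ekk; apply: H; lia.
Qed.

Lemma P_ndesc n x (i : 'I_n) : (2 <= n)%N -> Inv n x -> P i x -> ndesc i x.
Proof.
move=> hn I; rewrite /P /ndesc; have hi : (val i < n)%N := ltn_ord i; have ei : nat_of_ord i = val i := erefl.
case: eqP => hi1.
- move=> H; rewrite hi1 /=.
  have h1 : 0 < sg1 (- x 1%:Z).
    by have := H 1%:Z ltac:(lia); rewrite (_ : sg1 1%:Z = - 1%:Z) // (invN I).
  have h2 := H 2%:Z ltac:(lia).
  rewrite (_ : sg1 2%:Z = 2%:Z) in h2; last by [].
  have n12 : x 1%:Z <> x 2%:Z by move/(invI I).
  have n12' : x 2%:Z <> - x 1%:Z by rewrite -(invN I); move/(invI I).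
  move: h1 h2; rewrite /sg1; repeat dgc; lia.
- move=> H; case: eqP => hi0.
  + have := H 0%N 1%N ltac:(lia) ltac:(lia) ltac:(lia).
    have := H 0%N 2%N ltac:(lia) ltac:(lia) ltac:(lia).
    rewrite (x0 I); lia.
  + have := H (val i) (val i).+1 (leqnn _) (ltnSn _) hi; lia.
Qed.

Lemma P_word n y (i : 'I_n) (c : seq 'I_n) : (2 <= n)%N -> Inv n y -> P i y -> i \notin c ->
  P i (y \o Deval c).
Proof.
move=> hn I HP; elim/last_ind: c => [|c j IH]; first by [].
rewrite mem_rcons in_cons negb_or => /andP [hij hic].
rewrite Deval_rcons.
apply: (P_step hn (Inv_word c hn I) (IH hic)); by rewrite eq_sym.
Qed.

Lemma split_last (T : eqType) (i : T) w : i \in w -> exists a b, w = a ++ i :: b /\ i \notin b.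
Proof.
elim: w => [|c w IH] //; rewrite in_cons; case: (boolP (i \in w)) => hw.
  have [a [b [-> hb]]] := IH hw; by exists (c :: a), b.
rewrite orbF => /eqP <-; by exists [::], w.
Qed.

Lemma inC_P n x (i : 'I_n) : (2 <= n)%N -> Inv n x -> (inC x i <-> P i x).
Proof.
move=> hn I.
have lenw : forall w' : seq 'I_n, (len n (Deval w') <= size w')%N.
  move=> w'; have := len_word w' hn (Inv_id n); by rewrite len_id.
split.
- move=> hC. have [w [e1 e2]] := word_exists hn I.
  have hi : i \notin w.
    apply/negP => hiw; apply: hC; exists w; split => //; split.
      by move=> y; rewrite e1.
    move=> w' hw'; have ew : Deval w' = x := functional_extensionality _ _ hw'.
    rewrite e2 -ew; exact: lenw.
  rewrite -e1; exact: (P_word hn (Inv_id n) (P_id i) hi).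
- move=> HP [w [[hw hmin] hiw]].
  have ex : Deval w = x := functional_extensionality _ _ hw.
  have [a [b [ew hb]]] := split_last hiw.
  pose v := x \o Deval (rev b).
  have ev : v = Deval a \o Dgen i.
    apply: functional_extensionality => y; rewrite /v /= -ex ew Deval_cat /=.
    by have := congr1 (fun f => f y) (Deval_rev b) => /= ->.
  have Iv : Inv n v := Inv_word (rev b) hn I.
  have hb' : i \notin rev b by rewrite mem_rev.
  have Pv : P i v := P_word hn I HP hb'.
  have nd := P_ndesc hn Iv Pv.
  have ls := len_step i hn Iv; rewrite nd /= in ls.
  have evi : v \o Dgen i = Deval a.
    rewrite ev; apply: functional_extensionality => y /=; by rewrite DgenK.
  rewrite evi in ls.
  have la := lenw a.
  have evb : v \o Deval b = x.
    apply: functional_extensionality => y; rewrite /v /=.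
    have := congr1 (fun f => f y) (Deval_rev (rev b)); rewrite revK /= => ->. by [].
  have lb := len_word b hn Iv; rewrite evb in lb.
  have [w0 [e01 e02]] := word_exists hn I.
  have := hmin w0 (fun y => ltac:(by rewrite e01)).
  rewrite e02 ew size_cat /=. lia.
Qed.

Lemma card_count n (x : int->int) :
  #|[set i : 'I_n | x (i.+1)%:Z < 0]| = count (fun v => v < 0) (sq n x).
Proof.
rewrite cardsE cardE /enum_mem size_filter -enumT /sq count_map.
have -> : iota 1 n = map succn (map val (enum 'I_n)) by rewrite val_enum_ord -(iotaDl 1).
rewrite !count_map; apply: eq_count => i /=. by [].
Qed.

Lemma sq_mem n x (k : nat) : (1 <= k <= n)%N -> x k%:Z \in sq n x.
Proof. move=> hk; apply: (map_f (fun k : nat => x k%:Z)); rewrite mem_iota; lia. Qed.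

Lemma sq_uniq n x : Inv n x -> uniq (sq n x).
Proof.
move=> I; rewrite map_inj_uniq ?iota_uniq // => a b /(invI I) [] //.
Qed.

Lemma count_le1 (s : seq int) (p : pred int) c : uniq s -> (forall v, v \in s -> p v -> v = c) ->
  (count p s <= 1)%N.
Proof.
move=> us h; rewrite -size_filter.
have : {subset filter p s <= [:: c]}.
  move=> v; rewrite mem_filter => /andP [pv vs]; rewrite inE (h v vs pv) eqxx //.
by move/(uniq_leq_size (filter_uniq p us)).
Qed.

Lemma count_ge3 (s : seq int) (p : pred int) a b c : uniq [:: a; b; c] ->
  a \in s -> b \in s -> c \in s -> p a -> p b -> p c -> (3 <= count p s)%N.
Proof.
move=> u ha hb hc pa pb pc; rewrite -size_filter.
have : {subset [:: a; b; c] <= filter p s}.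
  by move=> v; rewrite !inE => /or3P [] /eqP ->; rewrite mem_filter ?pa ?pb ?pc.
by move/(uniq_leq_size u).
Qed.

Lemma sg1_ge2 y : 2 <= y -> sg1 y = y.
Proof. rewrite /sg1; repeat dgc; lia. Qed.

Lemma sq_head n x : (1 <= n)%N -> sq n x = x 1%:Z :: map (fun k : nat => x k%:Z) (iota 2 n.-1).
Proof. by case: n. Qed.

Lemma P1_cond n x : (2 <= n)%N -> Inv n x ->
 ((forall k : int, 0 < k <= n%:Z -> 0 < sg1 (x (sg1 k))) <->
  ((x 1 = 1 /\ (forall k : nat, (1 <= k <= n)%N -> 0 < x k%:Z)) \/
   (x 1 < -1 /\ (forall j : int, x j = 1 -> j < -1) /\
    #|[set i : 'I_n | x (i.+1)%:Z < 0]| = 2%N))).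
Proof.
move=> hn I; rewrite card_count.
rewrite -[(1 : int)]/(1%:Z).
have xm1 : x (- 1%:Z) = - x 1%:Z := invN I _.
have r1 := invR I (y := 1%:Z) ltac:(lia).
have sgm1 : sg1 (- 1%:Z) = 1%:Z by [].
have sgp1 : sg1 (1%:Z) = - 1%:Z by [].
have toNat : forall k : int, 0 < k -> exists m : nat, k = m%:Z.
  by move=> k hk; exists (absz k); lia.
split.
- move=> H.
  have h1 : 0 < sg1 (- x 1%:Z) by have := H 1%:Z ltac:(lia); rewrite sgp1 xm1.
  have hk : forall k : nat, (2 <= k <= n)%N -> 0 < sg1 (x k%:Z).
    move=> k hk; have := H k%:Z ltac:(lia); rewrite (@sg1_ge2 k%:Z) //; lia.
  have hk' : forall k : nat, (2 <= k <= n)%N -> 0 < x k%:Z \/ x k%:Z = - 1%:Z.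
    move=> k /hk; rewrite /sg1; repeat dgc; lia.
  have [a1|a2] : x 1%:Z = 1%:Z \/ x 1%:Z <= -2.
    by move: h1; rewrite /sg1; repeat dgc; lia.
  + left; split => // k hk1.
    case: (k =P 1%N) => [->|kn1]; first by rewrite a1.
    have [//|e] := hk' k ltac:(lia).
    have : x k%:Z = x (- 1%:Z) by rewrite xm1 a1.
    by move/(invI I).
  + right; split; first lia; split.
    * move=> j hj. case: (ltP j (-1)) => // hj1.
      have [ej|ej] : j = - 1%:Z \/ 0 <= j by lia.
        by move: hj; rewrite ej xm1; lia.
      have [m em] : exists m : nat, j = m%:Z by exists (absz j); lia.
      subst j.
      case: (ltnP n m) => hmn.
        by move: hj; rewrite (invB I) //; lia.
      case: m hj {hj1 ej} hmn => [|[|m]] hj hmn.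
      -- by move: hj; rewrite (x0 I).
      -- move: hj a2; lia.
      -- have := hk m.+2 ltac:(lia); rewrite hj.
         by [].
    * rewrite sq_head ?(ltnW hn) //=.
      set c := count _ _.
      have hc : (c <= 1)%N.
        apply: (@count_le1 _ _ (- 1%:Z)).
          have := sq_uniq I; rewrite sq_head ?(ltnW hn) //= => /andP [].
          by [].
        move=> v /mapP [kk hkk ->] /= hv. rewrite mem_iota in hkk.
        have [h|//] := hk' kk ltac:(lia). lia.
      have := invP I; rewrite sq_head ?(ltnW hn) //= -/c.
      have -> : (x 1%:Z < 0) = true by apply/idP; lia.
      by case: c hc => [|[|c]].
- move=> [[a1 hpos]|[a2 [hinv hcnt]]] k hk.
  + have [m em] := toNat k ltac:(lia); subst k.
    case: (m =P 1%N) => [->|mn1].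
      by rewrite sgp1 xm1 a1.
    rewrite (@sg1_ge2 m%:Z); last lia.
    have := hpos m ltac:(lia) => hp.
    have ne1 : x m%:Z <> 1%:Z.
      by rewrite -a1 => /(invI I) [].
    rewrite sg1_ge2 //; lia.
  + have [m em] := toNat k ltac:(lia); subst k.
    case: (m =P 1%N) => [->|mn1].
      rewrite sgp1 xm1 sg1_ge2; lia.
    rewrite (@sg1_ge2 m%:Z); last lia.
    have ne1 : x m%:Z <> 1%:Z by move/hinv; lia.
    have rm := invR I (y := m%:Z) ltac:(lia).
    case: (lerP 2 (x m%:Z)) => h2; first by rewrite sg1_ge2 //; lia.
    have [e|hneg] : x m%:Z = - 1%:Z \/ x m%:Z < - 1%:Z by lia.
      by rewrite e.
    exfalso.
    have [k0 [hk0 ek0]] := invS I (v := 1%:Z) ltac:(lia).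
    have [q [hq eq]] : exists q : nat, (2 <= q <= n)%N /\ x q%:Z = - 1%:Z.
      have [e|e] : x k0 = 1%:Z \/ x k0 = - 1%:Z by lia.
        have := hinv _ e => hl.
        exists (absz k0); split; first lia.
        have -> : (absz k0)%:Z = - k0 by lia.
        by rewrite (invN I) e.
      have hk0p : 0 < k0.
        case: (ltP 0 k0) => // hle.
        have : x (- k0) = 1%:Z by rewrite (invN I) e.
        move/hinv; lia.
      have [q eq] := toNat k0 hk0p; subst k0.
      exists q; split => //.
      case: (q =P 1%N) => [eq1|]; last lia.
      by move: e; rewrite eq1; lia.
    have : (3 <= count (fun v : int => (v < 0)%R) (sq n x))%N.
      apply: (@count_ge3 _ _ (x 1%:Z) (- 1%:Z) (x m%:Z)).
      - rewrite /= !inE negb_or andbT.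
        have n1 : x 1%:Z != - 1%:Z by apply/eqP; lia.
        have n2 : x 1%:Z != x m%:Z by apply/eqP => /(invI I) [] /eqP; lia.
        have n3 : - 1%:Z != x m%:Z by apply/eqP; lia.
        by rewrite n1 n2 n3.
      - by apply: sq_mem; lia.
      - by rewrite -eq; apply: sq_mem; lia.
      - by apply: sq_mem; lia.
      - by apply/idP; lia.
      - by apply/idP; lia.
      - by apply/idP; lia.
    by rewrite hcnt.
Qed.

Unset Implicit Arguments.

Theorem mainTheorem16 (n : nat) (u : int -> int) :
  (2 <= n)%N -> inDn n u ->
  let cond :=
    (u 1 = 1 /\ (forall k : nat, (1 <= k <= n)%N -> 0 < u k%:Z)) \/
    (u 1 < -1 /\ (forall j : int, u j = 1 -> j < -1) /\
     #|[set i : 'I_n | u (i.+1)%:Z < 0]| = 2%N) in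
  let X (i : 'I_n) :=
    val i <> 1%N /\
    (forall j k : nat, (j <= i)%N -> (i < k)%N -> (k <= n)%N ->
       `|u j%:Z| < u k%:Z) in
  (cond -> forall i : 'I_n, inC u i <-> (val i = 1%N \/ X i)) /\
  (~ cond -> forall i : 'I_n, inC u i <-> X i).
Proof.
move=> hn [w hw] cond X.
have ew : Deval w = u := functional_extensionality _ _ hw.
have I : Inv n u by rewrite -ew; exact: (Inv_word w hn (Inv_id n)).
have key : forall i : 'I_n, inC u i <-> P i u := fun i => @inC_P n u i hn I.
have hc := @P1_cond n u hn I.
split => [hcond | hncond] i; rewrite key /P /X; case: eqP => hi1.
- split => _; [by left | exact: (proj2 hc hcond)].
- split => [H|[//|[_ H]]]; [by right; split | exact: H].
- split => [H|[]] //; exfalso; apply: hncond; exact: (proj1 hc H).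
- split => [H|[_ H]] //.
Qed.
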